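(* Let $\mathcal{D}_\varphi\in\Delta(\Sigma^V)$ be an identity-independent signaling scheme with finite signal space $\Sigma\subset[0,1]$. Then it is persuasive if and only if (i) $\Delta_\theta=0$ for every $\theta\in\Sigma$ with $\theta>0$, and (ii) if $0\in\Sigma$, then $\Delta_0\ge0$.
   Context: Setting. $V$ is a finite set of $n$ task types and $W=(W_{u,v})_{u,v\in V}$ is a symmetric matrix with entries in $[0,1]$ and $W_{v,v}=1$; $N(v)=\{v'\ne v: W_{v,v'}>0\}$. There are $n$ agents; the type profile $t=(t_1,\dots,t_n)$ is a uniformly random bijection $[n]\to V$. An identity-independent signaling scheme is given by a distribution $\mathcal{D}_\varphi$ on $\Sigma^V$: $s=(s_v)_{v\in V}\sim\mathcal{D}_\varphi$ is drawn independently of $t$ and agent $i$ privately receives $s_{t_i}$. For agent $i$, a signal $\theta\in\Sigma$ with $\Pr[s_{t_i}=\theta]>0$ and $x\ge0$, let $Q_i(x\mid\theta)=\mathbb{E}\big[x+\sum_{v'\neq t_i}W_{t_i,v'}s_{v'}\,\big|\,s_{t_i}=\theta\big]$ (over the joint law of $t,s$). The scheme is persuasive if for every agent $i$ and every such $\theta$: $Q_i(\theta\mid\theta)\ge1$ and $\theta=\min\{x\ge0:Q_i(x\mid\theta)\ge1\}$. Slack: for $\theta\in\Sigma$, $\mathrm{Contrib}_\theta=\mathbb{E}_{s\sim\mathcal{D}_\varphi}\big[\sum_{v\in V}\mathbf 1\{s_v=\theta\}\sum_{v'\in N(v)}W_{v,v'}s_{v'}\big]$, $\mathrm{Num}_\theta=\mathbb{E}_{s\sim\mathcal{D}_\varphi}\big[\sum_{v\in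 V}\mathbf 1\{s_v=\theta\}\big]$, and $\Delta_\theta=\mathrm{Contrib}_\theta-(1-\theta)\mathrm{Num}_\theta$. *)

(* Defs.v *)
From HB Require Import structures.
From mathcomp Require Import all_boot all_order all_algebra.
Set Implicit Arguments. Unset Strict Implicit. Unset Printing Implicit Defensive.
Import Order.TTheory GRing.Theory Num.Theory.
Local Open Scope ring_scope.

Section Defs.
Variables (R : realFieldType) (V Sig : finType).
(* W : weight matrix on task types; sv : Sig -> R embeds the finite signal
   space Sigma (a subset of [0,1]) into the reals;
   D : the distribution D_phi on Sigma^V. *)
Variables (W : V -> V -> R) (sv : Sig -> R) (D : {ffun V -> Sig} -> R).

(* type profiles: bijections [n] -> V, n = #|V|; agent set 'I_#|V| *)
Definition profiles : {set {ffun 'I_#|V| -> V}} := [set t : {ffun 'I_#|V| -> V} | injectiveb t].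

(* expectation over the joint law of (t, s): t uniform over bijections,
   s ~ D independent of t *)
Definition jointE (F : {ffun 'I_#|V| -> V} -> {ffun V -> Sig} -> R) : R :=
  \sum_(t in profiles) \sum_(s : {ffun V -> Sig}) (#|profiles|%:R)^-1 * D s * F t s.

Definition prob_sig (i : 'I_#|V|) (th : Sig) : R :=
  jointE (fun t s => (s (t i) == th)%:R).

Definition Q (i : 'I_#|V|) (x : R) (th : Sig) : R :=
  jointE (fun t s => (s (t i) == th)%:R *
            (x + \sum_(v' | v' != t i) W (t i) v' * sv (s v'))) / prob_sig i th.

Definition persuasive : Prop :=
  forall (i : 'I_#|V|) (th : Sig), 0 < prob_sig i th ->
    1 <= Q i (sv th) th /\
    (0 <= sv th /\ 1 <= Q i (sv th) th /\
     forall x : R, 0 <= x -> 1 <= Q i x th -> sv th <= x).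

Definition nbr (v v' : V) : bool := (v' != v) && (0 < W v v').

Definition EDs (F : {ffun V -> Sig} -> R) : R := \sum_(s : {ffun V -> Sig}) D s * F s.

Definition Contrib (th : Sig) : R :=
  EDs (fun s => \sum_(v : V) (s v == th)%:R *
                  \sum_(v' | nbr v v') W v v' * sv (s v')).

Definition Num (th : Sig) : R := EDs (fun s => \sum_(v : V) (s v == th)%:R).

Definition Slack (th : Sig) : R := Contrib th - (1 - sv th) * Num th.

End Defs.

(* Main.v *)
Require Import Defs.
From HB Require Import structures.
From mathcomp Require Import all_boot all_order all_algebra.
From mathcomp Require Import perm ring lra.
Set Implicit Arguments. Unset Strict Implicit. Unset Printing Implicit Defensive.
Import Order.TTheory GRing.Theory Num.Theory.
Local Open Scope ring_scope.

Lemma inj_tperm (V : finType) (v w : V) (t : {ffun 'I_#|V| -> V}) :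
  injectiveb [ffun j => tperm v w (t j)] = injectiveb t.
Proof.
apply/injectiveP/injectiveP => H a b E.
- apply: H; by rewrite !ffunE E.
- move: E; rewrite !ffunE => /perm_inj; exact: H.
Qed.

Lemma cnt_const (R : realFieldType) (V : finType) (i : 'I_#|V|) (v w : V) :
  \sum_(t in profiles V) ((t i == v)%:R : R) = \sum_(t in profiles V) ((t i == w)%:R : R).
Proof.
pose f (t : {ffun 'I_#|V| -> V}) := [ffun j => tperm v w (t j)].
have finv : involutive f.
  by move=> t; apply/ffunP => j; rewrite !ffunE tpermK.
rewrite (reindex_inj (can_inj finv)) /=.
apply: eq_big => t.
  by rewrite !inE inj_tperm.
move=> _; rewrite ffunE.
congr (_%:R).
by rewrite -[X in _ == X](tpermR v w) (inj_eq (@perm_inj _ _)).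
Qed.

Lemma sum_ti (R : realFieldType) (V : finType) (i : 'I_#|V|) :
  exists c : R, 0 < c /\ forall h : V -> R,
    \sum_(t in profiles V) h (t i) = c * \sum_(v : V) h v.
Proof.
pose v0 := enum_val i.
exists (\sum_(t in profiles V) ((t i == v0)%:R : R)); split.
  pose t0 : {ffun 'I_#|V| -> V} := [ffun j => enum_val j].
  have Pt0 : t0 \in profiles V.
    rewrite inE; apply/injectiveP => a b; rewrite !ffunE; exact: enum_val_inj.
  rewrite (bigD1 t0) //= ffunE eqxx ltr_wpDr //.
  by apply: sumr_ge0 => t _; rewrite ler0n.
move=> h.
transitivity (\sum_(t in profiles V) \sum_(v : V) ((t i == v)%:R * h v)).
  apply: eq_bigr => t _.
  rewrite (bigD1 (t i)) //= eqxx mul1r big1 ?addr0 // => v /negbTE.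
  by rewrite eq_sym => ->; rewrite mul0r.
rewrite exchange_big /= mulr_sumr; apply: eq_bigr => v _.
by rewrite -mulr_suml (cnt_const R i v v0) mulrC.
Qed.

Lemma jointE_ti (R : realFieldType) (V Sig : finType) (D : {ffun V -> Sig} -> R)
  (i : 'I_#|V|) : exists k : R, 0 < k /\ forall G : V -> {ffun V -> Sig} -> R,
  jointE D (fun t s => G (t i) s) = k * \sum_(v : V) \sum_(s : {ffun V -> Sig}) D s * G v s.
Proof.
have [c [c0 Hc]] := sum_ti R i.
exists (#|profiles V|%:R^-1 * c); split.
  apply: mulr_gt0 => //; rewrite invr_gt0 ltr0n.
  apply/card_gt0P; exists [ffun j => enum_val j].
  rewrite inE; apply/injectiveP => a b; rewrite !ffunE; exact: enum_val_inj.
move=> G.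
rewrite /jointE (Hc (fun v => \sum_(s : {ffun V -> Sig}) #|profiles V|%:R^-1 * D s * G v s)).
rewrite [_ * c]mulrC -mulrA; congr (_ * _); rewrite mulr_sumr; apply: eq_bigr => v _.
rewrite mulr_sumr; apply: eq_bigr => s _; by rewrite mulrA.
Qed.

Lemma Snbr (R : realFieldType) (V Sig : finType) (W : V -> V -> R) (sv : Sig -> R)
  (W_range : forall u v, 0 <= W u v <= 1) (v : V) (s : {ffun V -> Sig}) :
  \sum_(v' | v' != v) W v v' * sv (s v') = \sum_(v' | nbr W v v') W v v' * sv (s v').
Proof.
rewrite (bigID (fun v' => 0 < W v v')) /=.
rewrite [X in _ + X]big1 ?addr0 //.
move=> v' /andP [_ Hn]; rewrite -leNgt in Hn.
have : W v v' = 0 by move: (W_range v v') => /andP [H1 _]; apply/eqP; rewrite eq_le Hn H1.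
by move=> ->; rewrite mul0r.
Qed.

Lemma num_contrib (R : realFieldType) (V Sig : finType) (W : V -> V -> R) (sv : Sig -> R)
  (D : {ffun V -> Sig} -> R)
  (W_range : forall u v, 0 <= W u v <= 1) (x : R) (th : Sig) :
  \sum_(v : V) \sum_(s : {ffun V -> Sig}) D s * ((s v == th)%:R *
            (x + \sum_(v' | v' != v) W v v' * sv (s v')))
  = x * Defs.Num D th + Contrib W sv D th.
Proof.
rewrite /Defs.Num /Contrib /EDs exchange_big mulr_sumr -big_split; apply: eq_bigr => s _.
rewrite !mulr_sumr -big_split; apply: eq_bigr => v _.
rewrite (Snbr _ W_range) /=; ring.
Qed.

Lemma prob_eq (R : realFieldType) (V Sig : finType) (D : {ffun V -> Sig} -> R)
  (i : 'I_#|V|) k (Hk : forall G : V -> {ffun V -> Sig} -> R,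
  jointE D (fun t s => G (t i) s) = k * \sum_(v : V) \sum_(s : {ffun V -> Sig}) D s * G v s)
  (th : Sig) : prob_sig D i th = k * Defs.Num D th.
Proof.
rewrite /prob_sig (Hk (fun v s => (s v == th)%:R)) /Defs.Num /EDs exchange_big.
congr (_ * _); apply: eq_bigr => s _; by rewrite mulr_sumr.
Qed.

Lemma Q_eq (R : realFieldType) (V Sig : finType) (W : V -> V -> R) (sv : Sig -> R)
  (D : {ffun V -> Sig} -> R)
  (W_range : forall u v, 0 <= W u v <= 1)
  (i : 'I_#|V|) k (k0 : 0 < k) (Hk : forall G : V -> {ffun V -> Sig} -> R,
  jointE D (fun t s => G (t i) s) = k * \sum_(v : V) \sum_(s : {ffun V -> Sig}) D s * G v s)
  (th : Sig) (x : R) : 0 < Defs.Num D th ->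
  Q W sv D i x th = x + Contrib W sv D th / Defs.Num D th.
Proof.
move=> N0.
rewrite /Q (prob_eq Hk).
rewrite (Hk (fun v s => (s v == th)%:R * (x + \sum_(v' | v' != v) W v v' * sv (s v')))).
rewrite num_contrib //.
field; apply/andP; split; rewrite gt_eqF //.
Qed.

Lemma bounds (R : realFieldType) (V Sig : finType) (W : V -> V -> R) (sv : Sig -> R)
  (D : {ffun V -> Sig} -> R)
  (W_range : forall u v, 0 <= W u v <= 1)
  (sv_range : forall th, 0 <= sv th <= 1)
  (D_ge0 : forall s, 0 <= D s) (th : Sig) :
  0 <= Defs.Num D th /\ 0 <= Contrib W sv D th /\
  Contrib W sv D th <= #|V|%:R * Defs.Num D th.
Proof.
have inner : forall v (s : {ffun V -> Sig}),
    0 <= \sum_(v' | nbr W v v') W v v' * sv (s v') <= #|V|%:R.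
  move=> v s; apply/andP; split.
    apply: sumr_ge0 => v' _; apply: mulr_ge0.
      by case/andP: (W_range v v').
    by case/andP: (sv_range (s v')).
  rewrite big_mkcond /= -sum1_card natr_sum.
  apply: ler_sum => v' _; case: ifP => _ //.
  case/andP: (W_range v v') => H1 H2; case/andP: (sv_range (s v')) => H3 H4.
  by rewrite -[1](mulr1 1); apply: ler_pM.
split; [|split].
- apply: sumr_ge0 => s _; apply: mulr_ge0 => //; apply: sumr_ge0 => v _; exact: ler0n.
- apply: sumr_ge0 => s _; apply: mulr_ge0 => //; apply: sumr_ge0 => v _.
  apply: mulr_ge0; first exact: ler0n. by case/andP: (inner v s).
- rewrite /Contrib /Defs.Num /EDs mulr_sumr; apply: ler_sum => s _.
  rewrite mulrCA; apply: ler_wpM2l => //; rewrite mulr_sumr; apply: ler_sum => v _.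
  rewrite mulrC; apply: ler_wpM2r; first exact: ler0n. by case/andP: (inner v s).
Qed.

Theorem lemma3p2 (R : realFieldType) (V Sig : finType)
    (W : V -> V -> R) (sv : Sig -> R) (D : {ffun V -> Sig} -> R)
    (W_sym : forall u v, W u v = W v u)
    (W_range : forall u v, 0 <= W u v <= 1)
    (W_diag : forall v, W v v = 1)
    (sv_inj : injective sv)
    (sv_range : forall th, 0 <= sv th <= 1)
    (D_ge0 : forall s, 0 <= D s)
    (D_sum1 : \sum_(s : {ffun V -> Sig}) D s = 1) :
  persuasive W sv D <->
  ((forall th : Sig, 0 < sv th -> Slack W sv D th = 0) /\
   (forall th : Sig, sv th = 0 -> 0 <= Slack W sv D th)).
Proof.
have key : forall th, 0 < Defs.Num D th -> exists i : 'I_#|V|, True.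
  move=> th; case: (pickP (@predT V)) => [v _ | Hn]; first by exists (enum_rank v).
  rewrite /Defs.Num /EDs big1 ?ltxx // => s _.
  by rewrite big1 ?mulr0 // => v; have := Hn v.
have zeroN : forall th, ~ (0 < Defs.Num D th) -> Slack W sv D th = 0.
  move=> th HN; have [N0 [C0 CN]] := bounds W_range sv_range D_ge0 th.
  have N00 : Defs.Num D th = 0.
    by apply/eqP; rewrite eq_le N0 andbT leNgt; apply/negP.
  rewrite /Slack N00 mulr0 subr0.
  by apply/eqP; rewrite eq_le C0 andbT; move: CN; rewrite N00 mulr0.
have SE : forall th, Slack W sv D th =
    Defs.Num D th * (Contrib W sv D th / Defs.Num D th - 1 + sv th) \/
    Slack W sv D th = 0.
  move=> th; case: (boolP (0 < Defs.Num D th)) => HN; last by right; apply: zeroN; apply/negP.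
  left; rewrite /Slack; field; by rewrite gt_eqF.
split.
- move=> Hp; split => th Ha.
  + case: (boolP (0 < Defs.Num D th)) => HN; last by apply: zeroN; apply/negP.
    have [i _] := key th HN.
    have [k [k0 Hk]] := jointE_ti D i.
    have Hpr : 0 < prob_sig D i th by rewrite (prob_eq Hk) mulr_gt0.
    have [H1 [H2 [H3 H4]]] := Hp i th Hpr.
    move: H1 H4; rewrite !(Q_eq sv W_range k0 Hk) // => H1 H4.
    set q := Contrib W sv D th / Defs.Num D th in H1 H4 *.
    case: (SE th) => ->; last by [].
    have [qle|qgt] := leP q 1.
      have H5 := H4 (1 - q); rewrite subr_ge0 (Q_eq sv W_range k0 Hk) // -/q in H5; have H6 : 1 <= 1 - q + q by lra. have {H5} H5 := H5 qle H6.
      have -> : q - 1 + sv th = 0 by lra.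
      by rewrite mulr0.
    have H5 := H4 0 (lexx 0); rewrite (Q_eq sv W_range k0 Hk) // -/q add0r in H5.
    have := H5 (ltW qgt); lra.
  + case: (boolP (0 < Defs.Num D th)) => HN; last by rewrite zeroN //; apply/negP.
    have [i _] := key th HN.
    have [k [k0 Hk]] := jointE_ti D i.
    have Hpr : 0 < prob_sig D i th by rewrite (prob_eq Hk) mulr_gt0.
    have [H1 [H2 [H3 H4]]] := Hp i th Hpr.
    move: H1; rewrite !(Q_eq sv W_range k0 Hk) // => H1.
    case: (SE th) => ->; last by [].
    apply: mulr_ge0; [exact: ltW | lra].
- move=> [HS HZ] i th Hpr.
  have [k [k0 Hk]] := jointE_ti D i.
  have HN : 0 < Defs.Num D th by move: Hpr; rewrite (prob_eq Hk) pmulr_rgt0.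
  rewrite !(Q_eq sv W_range k0 Hk) //.
  set q := Contrib W sv D th / Defs.Num D th.
  have E : Slack W sv D th = Defs.Num D th * (q - 1 + sv th).
    rewrite /Slack /q; field; by rewrite gt_eqF.
  have [a0 a1] := andP (sv_range th).
  have [apos|azero] := boolP (0 < sv th).
    have := HS th apos; rewrite E => /eqP; rewrite mulf_eq0 gt_eqF //= => /eqP Hq.
    split; first lra. split; first by []. split; first lra.
    move=> x x0; rewrite (Q_eq sv W_range k0 Hk) // -/q => Hx; lra.
  have a00 : sv th = 0 by apply/eqP; rewrite eq_le a0 andbT leNgt.
  have := HZ th a00; rewrite E pmulr_rge0 // => Hq.
  split; first lra. split; first by []. split; first lra.
  by move=> x x0 _; rewrite a00.
Qed.
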